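(* Let $q\geq2$ and $0<\alpha<1/q$. There exists a deterministic algorithm for Anti-$q$-SG which on every input of length $n$ incurs a cost of at most $\alpha n$ and which reads $$b=K_{1/q}(\alpha)\,n+O(\log n+\log\log q)=(1-h_q(1-\alpha))\,n\log_2q+O(\log n+\log\log q)$$ bits of advice.
   Context: Anti-$q$-SG: inputs $(n,x_1,\dots,x_n)$ with $x_i\in[q]$; in round $i$ the algorithm knows $n,x_1,\dots,x_{i-1}$ and outputs $y_i\in[q]$, paying $1$ if $y_i=x_i$ and $0$ otherwise; $n$ is the length. Advice is read from an infinite tape prepared by an oracle knowing the whole input. $K_y(x)=x\log_2(x/y)+(1-x)\log_2((1-x)/(1-y))$; $h_q(x)=x\log_q(q-1)-x\log_qx-(1-x)\log_q(1-x)$. *)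

(* Defs.v *)
From Stdlib Require Import Reals Lra Lia List.
Import ListNotations.
Open Scope R_scope.

Definition log2 (x : R) : R := ln x / ln 2.
Definition logb (b x : R) : R := ln x / ln b.

Definition Kdiv (y x : R) : R :=
  x * log2 (x / y) + (1 - x) * log2 ((1 - x) / (1 - y)).

Definition hq (q x : R) : R :=
  x * logb q (q - 1) - x * logb q x - (1 - x) * logb q (1 - x).

(* The alphabet [q] is represented as {0, ..., q-1}.
   An input (n, x_1, ..., x_n) is a list x of length n with entries < q. *)
Definition valid_input (q : nat) (x : list nat) : Prop :=
  forall a, In a x -> (a < q)%nat.

Definition tape := nat -> bool.

(* A deterministic online algorithm with advice: in round i (0-based here),
   given n, the revealed prefix x_1..x_{i-1} and the advice tape, it outputs y_i. *)
Definition algorithm := nat -> list nat -> tape -> nat.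

Definition oracle := list nat -> tape.

Definition out (A : algorithm) (x : list nat) (t : tape) (i : nat) : nat :=
  A (length x) (firstn i x) t.

Definition cost (A : algorithm) (O : oracle) (x : list nat) : nat :=
  length (filter (fun i => Nat.eqb (out A x (O x) i) (nth i x 0%nat))
                 (seq 0 (length x))).

(* On input x, A reads at most b bits of the tape O x: its whole behaviour
   is determined by the first b bits (any tape agreeing with O x on the
   positions j < b yields the same outputs in every round). *)
Definition reads_at_most (A : algorithm) (O : oracle) (x : list nat) (b : R) : Prop :=
  forall t' : tape, (forall j : nat, INR j < b -> t' j = O x j) ->
  forall i : nat, (i < length x)%nat -> out A x t' i = out A x (O x) i.

(* Main.v *)
Require Import Defs.
From Stdlib Require Import Reals List.
From Stdlib Require Import Lra Lia Binomial ZArith ClassicalEpsilon Classical.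
Import ListNotations.
Open Scope R_scope.

Lemma ln_le' : forall x y, 0 < x -> x <= y -> ln x <= ln y.
Proof. intros x y Hx [H|H]. left; apply ln_increasing; auto. subst; lra. Qed.

Lemma ln_sub1 : forall x, 0 < x -> ln x <= x - 1.
Proof. intros x Hx. pose proof (exp_ineq1_le (ln x)). rewrite exp_ln in H; lra. Qed.

Lemma ln_div' : forall x y, 0 < x -> 0 < y -> ln (x / y) = ln x - ln y.
Proof. intros. unfold Rdiv. rewrite ln_mult, ln_Rinv; try lra. apply Rinv_0_lt_compat; auto. Qed.

Lemma ln2_pos : 0 < ln 2.
Proof. pose proof ln_lt_2; lra. Qed.

Lemma ln2_lt1 : ln 2 < 1.
Proof. pose proof (exp_ineq1 1 ltac:(lra)). rewrite <- (ln_exp 1). apply ln_increasing; lra. Qed.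

Lemma identity (Q a : R) : 2 <= Q -> 0 < a < 1 / Q ->
  Kdiv (1 / Q) a = (1 - hq Q (1 - a)) * log2 Q.
Proof.
  intros HQ [Ha1 Ha2].
  assert (HaQ : a * Q < 1). { apply (Rmult_lt_compat_r Q) in Ha2; try lra. field_simplify in Ha2; lra. }
  assert (Ha3 : a < 1) by nra.
  unfold Kdiv, hq, log2, logb.
  replace (a / (1 / Q)) with (a * Q) by (field; lra).
  replace ((1 - a) / (1 - 1 / Q)) with ((1 - a) * Q / (Q - 1)) by (field; lra).
  replace (1 - (1 - a)) with a by ring.
  rewrite ln_mult by lra. rewrite ln_div' by nra. rewrite ln_mult by lra.
  assert (ln Q > 0). { rewrite <- ln_1. apply ln_increasing; lra. }
  pose proof ln2_pos.
  field. lra.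
Qed.

Fixpoint agr (x y : list nat) : nat :=
  match x, y with
  | a :: x', b :: y' => ((if Nat.eqb a b then 1 else 0) + agr x' y')%nat
  | _, _ => 0%nat
  end.

Fixpoint words (q n : nat) : list (list nat) :=
  match n with
  | O => [[]]
  | S n' => flat_map (fun b => map (cons b) (words q n')) (seq 0 q)
  end.

Definition cnt {A} (P : A -> bool) (l : list A) : nat := length (filter P l).

Lemma cnt_flat_map {A B} (P : B -> bool) (F : A -> list B) l :
  cnt P (flat_map F l) = list_sum (map (fun a => cnt P (F a)) l).
Proof.
  induction l; simpl; auto. unfold cnt in *. rewrite filter_app, length_app, IHl. auto.
Qed.

Lemma cnt_map {A B} (P : B -> bool) (f : A -> B) l :
  cnt P (map f l) = cnt (fun a => P (f a)) l.
Proof. induction l; simpl; auto. unfold cnt in *; simpl. destruct (P (f a)); simpl; auto. Qed.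

Lemma length_flat_map_const {A B} (F : A -> list B) l k :
  (forall a, length (F a) = k) -> length (flat_map F l) = (length l * k)%nat.
Proof. intros H; induction l; simpl; auto. rewrite length_app, H, IHl. lia. Qed.

Lemma words_length q n : length (words q n) = (q ^ n)%nat.
Proof.
  induction n; simpl; auto.
  rewrite (length_flat_map_const _ _ (q ^ n)%nat). rewrite length_seq. lia.
  intros; rewrite length_map; auto.
Qed.

Lemma words_valid q n y : In y (words q n) -> length y = n /\ valid_input q y.
Proof.
  revert y; induction n; simpl; intros y H.
  - destruct H as [<-|[]]. split; auto. intros a [].
  - apply in_flat_map in H. destruct H as [b [Hb Hy]]. apply in_map_iff in Hy.
    destruct Hy as [y' [<- Hy']]. apply IHn in Hy'. destruct Hy' as [H1 H2].
    apply in_seq in Hb. split; simpl; auto. intros c [<-|Hc]; [lia| auto].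
Qed.

Lemma sum_seq_notin (g : nat -> nat) a c2 s k :
  (forall b, b <> a -> g b = c2) -> ~ (s <= a < s + k)%nat ->
  list_sum (map g (seq s k)) = (k * c2)%nat.
Proof.
  intros Hg; revert s; induction k; intros s Hs; simpl; auto.
  rewrite Hg by lia. rewrite IHk by lia. lia.
Qed.

Lemma sum_seq_in (g : nat -> nat) a c1 c2 s k :
  (forall b, b <> a -> g b = c2) -> g a = c1 -> (s <= a < s + k)%nat ->
  (list_sum (map g (seq s k)) + c2 = c1 + k * c2)%nat.
Proof.
  intros Hg Ha; revert s; induction k; intros s Hs; simpl. lia.
  destruct (Nat.eq_dec s a).
  - subst s. rewrite Ha. rewrite (sum_seq_notin g a c2) by (auto; lia). lia.
  - rewrite Hg by auto. specialize (IHk (S s) ltac:(lia)). lia.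
Qed.

Lemma words_count_S q n a x (P : nat -> bool) :
  (a < q)%nat ->
  (cnt (fun y => P (agr (a :: x) y)) (words q (S n)) + cnt (fun y => P (agr x y)) (words q n)
   = cnt (fun y => P (S (agr x y))) (words q n) + q * cnt (fun y => P (agr x y)) (words q n))%nat.
Proof.
  intros Ha. simpl words. rewrite cnt_flat_map.
  rewrite (sum_seq_in _ a (cnt (fun y => P (S (agr x y))) (words q n)) (cnt (fun y => P (agr x y)) (words q n))).
  - lia.
  - intros b Hb. rewrite cnt_map. simpl. apply Nat.eqb_neq in Hb. rewrite Nat.eqb_sym, Hb. reflexivity.
  - rewrite cnt_map. simpl. rewrite Nat.eqb_refl. reflexivity.
  - lia.
Qed.

Lemma C_n0 n : C n 0 = 1.
Proof. unfold C. simpl. rewrite Nat.sub_0_r. field. apply INR_fact_neq_0. Qed.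
Lemma C_nn n : C n n = 1.
Proof. unfold C. rewrite Nat.sub_diag. simpl. field. apply INR_fact_neq_0. Qed.

Lemma count_lb q : (1 <= q)%nat -> forall n x m, valid_input q x -> length x = n -> (m <= n)%nat ->
  C n m * INR (q - 1) ^ (n - m) <= INR (cnt (fun y => Nat.leb (agr x y) m) (words q n)).
Proof.
  intros Hq n; induction n; intros x m Hv Hl Hm.
  - destruct x; [|discriminate]. assert (m = 0%nat) by lia. subst. rewrite C_n0. simpl. lra.
  - destruct x as [|a x]; [discriminate|]. simpl in Hl. injection Hl as Hl.
    assert (Hv' : valid_input q x) by (intros c Hc; apply Hv; simpl; auto).
    assert (Ha : (a < q)%nat) by (apply Hv; simpl; auto).
    pose proof (words_count_S q n a x (fun k => Nat.leb k m) Ha) as E.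
    assert (E' : INR (cnt (fun y => Nat.leb (agr (a :: x) y) m) (words q (S n))) =
       INR (cnt (fun y => Nat.leb (S (agr x y)) m) (words q n)) + INR (q - 1) * INR (cnt (fun y => Nat.leb (agr x y) m) (words q n))).
    { rewrite <- mult_INR, <- plus_INR. f_equal. destruct q; [lia|]. simpl in E |- *. rewrite Nat.sub_0_r. lia. }
    rewrite E'. clear E E'.
    destruct m as [|m].
    + rewrite C_n0. simpl. 
      assert (cnt (fun y => Nat.leb (S (agr x y)) 0) (words q n) = 0%nat).
      { unfold cnt. clear. induction (words q n); simpl; auto. }
      simpl in H |- *. rewrite H. specialize (IHn x 0%nat Hv' Hl ltac:(lia)). rewrite C_n0 in IHn. simpl INR.
      rewrite Nat.sub_0_r in IHn. assert (0 <= INR (q-1)) by apply pos_INR. nra.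
    + simpl Nat.leb. change (fun y => Nat.leb (agr x y) m) with (fun y => Nat.leb (agr x y) m).
      assert (Hc0 : 0 <= INR (cnt (fun y => Nat.leb (agr x y) (S m)) (words q n))) by apply pos_INR.
      assert (0 <= INR (q-1)) by apply pos_INR.
      destruct (Nat.eq_dec m n).
      * subst m. rewrite C_nn, Nat.sub_diag. simpl.
        specialize (IHn x n Hv' Hl ltac:(lia)). rewrite C_nn, Nat.sub_diag in IHn. simpl in IHn. nra.
      * pose proof (IHn x m Hv' Hl ltac:(lia)) as I1. pose proof (IHn x (S m) Hv' Hl ltac:(lia)) as I2.
        rewrite <- pascal by lia. replace (S n - S m)%nat with (S (n - S m)) by lia.
        replace (n - m)%nat with (S (n - S m)) in I1 by lia. simpl. simpl in I1. nra.
Qed.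

Lemma sum_map_plus {B} (g h : B -> nat) W :
  list_sum (map (fun y => g y + h y)%nat W) = (list_sum (map g W) + list_sum (map h W))%nat.
Proof. induction W; simpl; auto. rewrite IHW; lia. Qed.

Lemma double_count {A B} (f : A -> B -> bool) (U : list A) (W : list B) :
  list_sum (map (fun y => cnt (fun x => f x y) U) W) = list_sum (map (fun x => cnt (fun y => f x y) W) U).
Proof.
  induction U as [|a U IH].
  - simpl. induction W; simpl; auto.
  - transitivity (list_sum (map (fun y => (if f a y then 1 else 0) + cnt (fun x => f x y) U)%nat W)).
    { f_equal. apply map_ext. intros b. unfold cnt. simpl. destruct (f a b); simpl; auto. }
    rewrite sum_map_plus, IH. simpl. f_equal. unfold cnt. clear. induction W; simpl; auto.
    destruct (f a a0); simpl; auto.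
Qed.

Lemma pigeon {B} (g : B -> nat) (l : list B) : l <> [] ->
  exists y, In y l /\ (list_sum (map g l) <= g y * length l)%nat.
Proof.
  induction l as [|a l IH]; intros H; [congruence|].
  destruct l as [|b l].
  - exists a; simpl; split; auto; lia.
  - destruct IH as [y [Hy Hle]]; [discriminate|].
    destruct (Nat.le_gt_cases (g y) (g a)).
    + exists a. split; [simpl; auto|]. simpl in *. nia.
    + exists y. split; [simpl; auto|]. simpl in *. nia.
Qed.

Definition covers (m : nat) (Ys : list (list nat)) (x : list nat) : bool :=
  existsb (fun y => Nat.leb (agr x y) m) Ys.

Lemma sum_lb {A} (h : A -> nat) (U : list A) (v : R) :
  (forall x, In x U -> v <= INR (h x)) -> INR (length U) * v <= INR (list_sum (map h U)).
Proof.
  induction U; intros H. simpl; lra.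
  replace (list_sum (map h (a::U))) with (h a + list_sum (map h U))%nat by reflexivity.
  replace (length (a :: U)) with (S (length U)) by reflexivity.
  rewrite plus_INR, S_INR. assert (v <= INR (h a)) by (apply H; simpl; auto).
  assert (INR (length U) * v <= INR (list_sum (map h U))) by (apply IHU; intros; apply H; simpl; auto). lra.
Qed.

Lemma filter_filter' {A} (P R : A -> bool) l : filter P (filter R l) = filter (fun x => andb (R x) (P x)) l.
Proof. induction l; simpl; auto. destruct (R a); simpl; [destruct (P a); simpl|]; rewrite IHl; auto. Qed.

Lemma cnt_split {A} (P : A -> bool) l : (cnt P l + cnt (fun x => negb (P x)) l)%nat = length l.
Proof. unfold cnt; induction l; simpl; auto. destruct (P a); simpl; lia. Qed.

Lemma cover_iter (q n m : nat) (V : R) :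
  let W := words q n in
  0 < V -> V <= INR (length W) ->
  (forall x, valid_input q x -> length x = n -> V <= INR (cnt (fun y => Nat.leb (agr x y) m) W)) ->
  forall k U, (forall x, In x U -> valid_input q x /\ length x = n) ->
  exists Ys, length Ys = k /\ (forall y, In y Ys -> In y W) /\
    INR (cnt (fun x => negb (covers m Ys x)) U) <= INR (length U) * (1 - V / INR (length W)) ^ k.
Proof.
  intros W HV HVW HN k. induction k; intros U HU.
  - exists []. simpl. split; auto. split; [tauto|]. unfold cnt. rewrite Rmult_1_r. apply le_INR.
    apply filter_length_le.
  - assert (HW : W <> []). { intro E. rewrite E in HVW. simpl in HVW. lra. }
    assert (HWp : 0 < INR (length W)) by lra.
    destruct (pigeon (fun y => cnt (fun x => Nat.leb (agr x y) m) U) W HW) as [y [Hy Hp]].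
    rewrite (double_count (fun x y => Nat.leb (agr x y) m)) in Hp.
    assert (Hs : INR (length U) * V <= INR (cnt (fun x => Nat.leb (agr x y) m) U) * INR (length W)).
    { rewrite <- mult_INR. eapply Rle_trans; [|apply le_INR; exact Hp].
      apply sum_lb. intros x Hx. destruct (HU x Hx). apply HN; auto. }
    set (U' := filter (fun x => negb (Nat.leb (agr x y) m)) U).
    destruct (IHk U') as [Ys [H1 [H2 H3]]].
    { intros x Hx. apply filter_In in Hx. apply HU. tauto. }
    exists (y :: Ys). split; [simpl; auto|]. split.
    { intros z [<-|Hz]; auto. }
    assert (E : cnt (fun x => negb (covers m (y :: Ys) x)) U = cnt (fun x => negb (covers m Ys x)) U').
    { unfold cnt, U'. rewrite filter_filter'. f_equal. apply filter_ext. intros x. unfold covers. simpl.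
      destruct (Nat.leb (agr x y) m); simpl; auto. }
    rewrite E. eapply Rle_trans; [exact H3|].
    pose proof (cnt_split (fun x => Nat.leb (agr x y) m) U) as Hsp.
    assert (EU : INR (length U') = INR (length U) - INR (cnt (fun x => Nat.leb (agr x y) m) U)).
    { unfold U'. change (length (filter _ U)) with (cnt (fun x => negb (Nat.leb (agr x y) m)) U).
      rewrite <- Hsp, plus_INR. ring. }
    rewrite EU. simpl.
    assert (0 <= (1 - V / INR (length W)) ^ k).
    { apply pow_le. assert (V / INR (length W) <= 1). { apply (Rmult_le_reg_r (INR (length W))); auto. field_simplify; lra. } lra. }
    assert (INR (length U) - INR (cnt (fun x => Nat.leb (agr x y) m) U) <= INR (length U) * (1 - V / INR (length W))).
    { assert (INR (length U) * V / INR (length W) <= INR (cnt (fun x => (agr x y <=? m)%nat) U)).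
      { apply (Rmult_le_reg_r (INR (length W))); auto. field_simplify; lra. }
      unfold Rdiv in *. lra. }
    nra.
Qed.

Lemma C_ratio n j : (j < n)%nat -> C n (S j) * INR (S j) = C n j * INR (n - j).
Proof.
  intros H. unfold C.
  replace (n - j)%nat with (S (n - S j)) by lia.
  rewrite !fact_simpl, !mult_INR.
  pose proof (INR_fact_neq_0 j). pose proof (INR_fact_neq_0 (n - S j)).
  assert (INR (S j) <> 0) by (apply not_0_INR; lia).
  assert (INR (S (n - S j)) <> 0) by (apply not_0_INR; lia).
  field. repeat split; auto.
Qed.

Lemma C_pos n j : (j <= n)%nat -> 0 < C n j.
Proof. intros. unfold C. pose proof (INR_fact_lt_0 n). pose proof (INR_fact_lt_0 j).
  pose proof (INR_fact_lt_0 (n-j)). apply Rdiv_lt_0_compat; auto. apply Rmult_lt_0_compat; auto. Qed.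

Definition Tm n r j := C n j * r ^ j * (1 - r) ^ (n - j).

Lemma T_ratio n r j : (j < n)%nat -> Tm n r (S j) * INR (S j) * (1 - r) = Tm n r j * INR (n - j) * r.
Proof.
  intros H. unfold Tm. replace (n - j)%nat with (S (n - S j)) by lia.
  simpl pow. pose proof (C_ratio n j H). replace (n - j)%nat with (S (n - S j)) in H0 by lia.
  transitivity ((C n (S j) * INR (S j)) * (r * r ^ j) * (1 - r) ^ (n - S j) * (1 - r)). ring.
  rewrite H0. ring.
Qed.

Lemma mode_lb n m : (m < n)%nat ->
  / INR (S n) <= C n m * (INR m / INR n) ^ m * (1 - INR m / INR n) ^ (n - m).
Proof.
  intros Hmn. set (r := INR m / INR n).
  assert (Hn : 0 < INR n) by (apply lt_0_INR; lia).
  assert (Hr : 0 <= r < 1).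
  { unfold r. split. apply Rmult_le_pos. apply pos_INR. left; apply Rinv_0_lt_compat; auto.
    apply Rmult_lt_reg_r with (INR n); auto. field_simplify; try lra. apply lt_INR; lia. }
  assert (Tnn : forall j, (j <= n)%nat -> 0 <= Tm n r j).
  { intros j Hj. unfold Tm. apply Rmult_le_pos. apply Rmult_le_pos. left; apply C_pos; auto.
    apply pow_le; lra. apply pow_le; lra. }
  assert (Hkey : forall j, (j < n)%nat -> INR (S j) * (1 - r) - INR (n - j) * r = (INR (S j) * INR n - INR (S j) * INR m - INR (n - j) * INR m) / INR n).
  { intros. unfold r. field. lra. }
  assert (Dn : forall j, (m <= j < n)%nat -> Tm n r (S j) <= Tm n r j).
  { intros j Hj. pose proof (T_ratio n r j ltac:(lia)) as E.
    assert (0 <= INR (S j) * (1 - r) - INR (n - j) * r).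
    { rewrite Hkey by lia. apply Rmult_le_pos; [|left; apply Rinv_0_lt_compat; auto].
      assert (S j * m + (n - j) * m <= S j * n)%nat by nia.
      apply le_INR in H. rewrite plus_INR, !mult_INR in H. lra. }
    assert (0 < INR (S j) * (1 - r)). { apply Rmult_lt_0_compat. apply lt_0_INR; lia. lra. }
    pose proof (Tnn (S j) ltac:(lia)). pose proof (Tnn j ltac:(lia)).
    assert (0 <= r) by lra. assert (0 <= INR (n-j)) by apply pos_INR.
    nra. }
  assert (Up : forall j, (j < m)%nat -> Tm n r j <= Tm n r (S j)).
  { intros j Hj. pose proof (T_ratio n r j ltac:(lia)) as E.
    assert (0 <= INR (n - j) * r - INR (S j) * (1 - r)).
    { assert (INR (n - j) * r - INR (S j) * (1 - r) = - (INR (S j) * (1 - r) - INR (n - j) * r)) by ring.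
      rewrite H, Hkey by lia. 
      assert (S j * n <= S j * m + (n - j) * m)%nat by nia.
      apply le_INR in H0. rewrite !plus_INR, !mult_INR in H0.
      replace (- ((INR (S j) * INR n - INR (S j) * INR m - INR (n - j) * INR m) / INR n)) with
        ((INR (S j) * INR m + INR (n - j) * INR m - INR (S j) * INR n) / INR n) by (field; lra).
      apply Rmult_le_pos; [|left; apply Rinv_0_lt_compat; auto].
      lra. }
    assert (0 < INR (S j) * (1 - r)). { apply Rmult_lt_0_compat. apply lt_0_INR; lia. lra. }
    pose proof (Tnn (S j) ltac:(lia)). pose proof (Tnn j ltac:(lia)).
    nra. }
  assert (Hall : forall j, (j <= n)%nat -> Tm n r j <= Tm n r m).
  { assert (A1 : forall d, (m + d <= n)%nat -> Tm n r (m + d) <= Tm n r m).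
    { induction d; intros Hd. rewrite Nat.add_0_r; lra.
      replace (m + S d)%nat with (S (m + d)) by lia. eapply Rle_trans; [apply Dn; lia|]. apply IHd; lia. }
    assert (A2 : forall d, (d <= m)%nat -> Tm n r (m - d) <= Tm n r m).
    { induction d; intros Hd. rewrite Nat.sub_0_r; lra.
      eapply Rle_trans; [|apply IHd; lia]. replace (m - d)%nat with (S (m - S d)) by lia. apply Up; lia. }
    intros j Hj. destruct (Nat.le_gt_cases m j).
    - replace j with (m + (j - m))%nat by lia. apply A1; lia.
    - replace j with (m - (m - j))%nat by lia. apply A2; lia. }
  assert (Hsum : sum_f_R0 (Tm n r) n = 1).
  { unfold Tm. rewrite <- binomial. replace (r + (1 - r)) with 1 by ring. apply pow1. }
  assert (sum_f_R0 (Tm n r) n <= sum_f_R0 (fun _ => Tm n r m) n) by (apply sum_Rle; auto).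
  rewrite sum_cte, Hsum in H. fold (Tm n r m).
  assert (0 < INR (S n)) by (apply lt_0_INR; lia).
  apply Rmult_le_reg_r with (INR (S n)); auto. rewrite Rinv_l by lra. lra.
Qed.

Lemma D_bound (N M a p : R) : 1 <= N -> 0 <= M <= a * N -> a * N < M + 1 -> (M = 0 \/ 1 <= M) ->
  0 < a -> a < p -> p <= 1/2 ->
  M * ln (M / N) + (N - M) * ln (1 - M / N) - M * ln p - (N - M) * ln (1 - p)
  <= N * (a * ln a - a * ln p + (1 - a) * ln (1 - a) - (1 - a) * ln (1 - p)) + ln N + 3.
Proof.
  intros HN [HM0 HMa] HMa1 HM Ha Hap Hp.
  set (t := a * N - M).
  assert (Ht : 0 <= t < 1) by (unfold t; lra).
  assert (HrN : M / N <= a). { apply Rmult_le_reg_r with N; [lra|]. field_simplify; lra. }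
  assert (Hr0 : 0 <= M / N). { apply Rmult_le_pos; [lra|]. left; apply Rinv_0_lt_compat; lra. }
  assert (Hlp : ln p <= ln (1 - p)) by (apply ln_le'; lra).
  assert (T3 : t * (ln p - ln (1 - p)) <= 0).
  { assert (0 <= t * (ln (1-p) - ln p)) by (apply Rmult_le_pos; lra). lra. }
  assert (T1 : M * ln (M / N) - N * a * ln a <= t * (- ln a)).
  { destruct HM as [HM|HM].
    - rewrite HM. unfold t. rewrite HM. lra.
    - assert (ln (M / N) <= ln a) by (apply ln_le'; [apply Rdiv_lt_0_compat; lra| lra]).
      unfold t. nra. }
  assert (T2 : (N - M) * ln (1 - M / N) - N * (1 - a) * ln (1 - a) <= 2 * t).
  { assert (E : (N - M) * ln (1 - M / N) - N * (1 - a) * ln (1 - a) =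
        (N - M) * ln ((1 - M / N) / (1 - a)) + t * ln (1 - a)).
    { rewrite ln_div' by lra. unfold t. ring. }
    rewrite E.
    assert (ln (1 - a) <= 0). { rewrite <- ln_1. apply ln_le'; lra. }
    assert (ln ((1 - M / N) / (1 - a)) <= (1 - M / N) / (1 - a) - 1) by (apply ln_sub1; apply Rdiv_lt_0_compat; lra).
    assert (HNM : 0 <= N - M) by nra.
    assert ((N - M) * ((1 - M / N) / (1 - a) - 1) <= 2 * t).
    { replace ((N - M) * ((1 - M / N) / (1 - a) - 1)) with ((N - M) / N * (t / (1 - a))) by (unfold t; field; lra).
      assert ((N - M) / N <= 1). { apply Rmult_le_reg_r with N; [lra|]. field_simplify; lra. }
      assert (t / (1 - a) <= 2 * t). { apply Rmult_le_reg_r with (1 - a); [lra|]. field_simplify; nra. }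
      assert (0 <= (N - M) / N) by (apply Rmult_le_pos; [lra|left; apply Rinv_0_lt_compat; lra]).
      assert (0 <= t / (1 - a)) by (apply Rmult_le_pos; [lra|left; apply Rinv_0_lt_compat; lra]).
      nra. }
    assert ((N - M) * ln ((1 - M / N) / (1 - a)) <= (N - M) * ((1 - M / N) / (1 - a) - 1)) by (apply Rmult_le_compat_l; auto).
    nra. }
  assert (T4 : t * (- ln a) <= ln N + 1).
  { assert (E : - ln a = ln N - ln (a * N)). { rewrite ln_mult by lra. ring. }
    rewrite E. assert (HlN : 0 <= ln N) by (rewrite <- ln_1; apply ln_le'; lra).
    destruct (Rle_or_lt 1 (a * N)).
    - assert (0 <= ln (a * N)) by (rewrite <- ln_1; apply ln_le'; lra). nra.
    - assert (HM0' : M = 0) by (destruct HM; lra). assert (Et : t = a * N) by (unfold t; lra).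
      assert (ln (/ (a * N)) <= / (a * N) - 1) by (apply ln_sub1; apply Rinv_0_lt_compat; nra).
      rewrite ln_Rinv in H0 by nra.
      assert (t * (- ln (a * N)) <= t * (/ (a * N) - 1)) by (apply Rmult_le_compat_l; lra).
      replace (t * (/ (a * N) - 1)) with (1 - t) in H1 by (rewrite Et; field; nra).
      nra. }
  replace (M * ln (M / N) + (N - M) * ln (1 - M / N) - M * ln p - (N - M) * ln (1 - p))
    with ((M * ln (M / N) - N * a * ln a) + ((N - M) * ln (1 - M / N) - N * (1 - a) * ln (1 - a))
          + t * (ln p - ln (1 - p)) + N * (a * ln a - a * ln p + (1 - a) * ln (1 - a) - (1 - a) * ln (1 - p)))
    by (unfold t; ring).
  lra.
Qed.

Lemma lnQV (q n m : nat) (a : R) : (2 <= q)%nat -> (1 <= n)%nat -> (m < n)%nat ->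
  INR m <= a * INR n < INR m + 1 -> 0 < a < 1 / INR q ->
  ln (INR q ^ n) - ln (C n m * INR (q - 1) ^ (n - m)) <=
  INR n * (a * ln a - a * ln (1 / INR q) + (1 - a) * ln (1 - a) - (1 - a) * ln (1 - 1 / INR q))
  + ln (INR n) + 3 + ln (INR n + 1).
Proof.
  intros Hq Hn Hmn [Hm1 Hm2] [Ha1 Ha2].
  set (qr := INR q). set (N := INR n). set (M := INR m).
  assert (Hqr : 2 <= qr) by (unfold qr; replace 2 with (INR 2) by (simpl; lra); apply le_INR; auto).
  assert (HN : 1 <= N) by (unfold N; replace 1 with (INR 1) by (simpl; lra); apply le_INR; auto).
  assert (HMN : M < N) by (apply lt_INR; auto).
  assert (Eq1 : INR (q - 1) = qr - 1) by (unfold qr; rewrite minus_INR by lia; simpl; ring).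
  assert (Enm : INR (n - m) = N - M) by (unfold N, M; rewrite minus_INR by lia; ring).
  assert (HC : 0 < C n m) by (apply C_pos; lia).
  rewrite Eq1. rewrite ln_mult by (auto; apply pow_lt; lra).
  rewrite !ln_pow by lra. rewrite Enm.
  assert (Ep : ln (1 / qr) = - ln qr) by (unfold Rdiv; rewrite Rmult_1_l, ln_Rinv; lra).
  assert (Ep1 : ln (1 - 1 / qr) = ln (qr - 1) - ln qr).
  { replace (1 - 1 / qr) with ((qr - 1) / qr) by (field; lra). apply ln_div'; lra. }
  pose proof (mode_lb n m Hmn) as Hmode. fold N M in Hmode.
  set (r := M / N) in *.
  assert (Hr : 0 <= r < 1).
  { unfold r. split. apply Rmult_le_pos. unfold M; apply pos_INR. left; apply Rinv_0_lt_compat; lra.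
    apply Rmult_lt_reg_r with N; [lra|]. field_simplify; lra. }
  assert (HS : INR (S n) = N + 1) by (unfold N; rewrite S_INR; ring).
  rewrite HS in Hmode.
  assert (Hpos : 0 < C n m * r ^ m * (1 - r) ^ (n - m)).
  { eapply Rlt_le_trans; [|exact Hmode]. apply Rinv_0_lt_compat; lra. }
  apply ln_le' in Hmode; [|apply Rinv_0_lt_compat; lra].
  rewrite ln_Rinv in Hmode by lra.
  assert (Erm : 0 < r ^ m /\ ln (r ^ m) = M * ln r).
  { destruct m as [|m']. unfold M; simpl. rewrite ln_1; split; [lra|ring].
    assert (0 < r). { unfold r, M. apply Rdiv_lt_0_compat; [apply lt_0_INR; lia|lra]. }
    split. apply pow_lt; auto. apply ln_pow; auto. }
  destruct Erm as [Hrm Erm].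
  rewrite ln_mult in Hmode by (try apply Rmult_lt_0_compat; auto; apply pow_lt; lra).
  rewrite ln_mult in Hmode by (auto).
  rewrite (ln_pow (1 - r)) in Hmode by lra. rewrite Enm, Erm in Hmode.
  assert (HMc : M = 0 \/ 1 <= M).
  { unfold M. destruct m. left; simpl; auto. right. replace 1 with (INR 1) by (simpl; lra). apply le_INR; lia. }
  assert (HM0 : 0 <= M) by (unfold M; apply pos_INR).
  assert (Hp : 1 / qr <= 1 / 2). { apply Rmult_le_compat_l; [lra|]. apply Rinv_le_contravar; lra. }
  assert (HMa : 0 <= M <= a * N) by (unfold M, N in *; lra). assert (HMa2 : a * N < M + 1) by (unfold M, N in *; lra).
  pose proof (D_bound N M a (1 / qr) HN HMa HMa2 HMc Ha1 Ha2 Hp) as HD.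
  fold r in HD. rewrite Ep, Ep1 in HD |- *.
  fold N. nra.
Qed.

Lemma words_complete q n x : valid_input q x -> length x = n -> In x (words q n).
Proof.
  revert x; induction n; intros x Hv Hl.
  - destruct x; [simpl; auto|discriminate].
  - destruct x as [|a x]; [discriminate|]. simpl. apply in_flat_map. exists a. split.
    + apply in_seq. assert (a < q)%nat by (apply Hv; simpl; auto). lia.
    + apply in_map. apply IHn; [intros c Hc; apply Hv; simpl; auto| simpl in Hl; lia].
Qed.

Lemma exp_pow' x k : exp x ^ k = exp (INR k * x).
Proof. induction k. simpl. rewrite Rmult_0_l, exp_0; auto.
  rewrite S_INR. simpl pow. rewrite IHk, <- exp_plus. f_equal; ring. Qed.

Lemma Int_part_nat (x : R) : 0 <= x -> INR (Z.to_nat (Int_part x)) <= x /\ x < INR (Z.to_nat (Int_part x)) + 1.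
Proof.
  intros Hx. destruct (base_Int_part x) as [H1 H2].
  assert (0 <= Int_part x)%Z.
  { destruct (Z.le_gt_cases 0 (Int_part x)); auto. apply Z.lt_le_pred in H. simpl in H.
    apply IZR_le in H. simpl in H. lra. }
  rewrite INR_IZR_INZ, Z2Nat.id by auto. lra.
Qed.

Lemma Kdiv_ln (qr a : R) : 2 <= qr -> 0 < a < 1 / qr ->
  Kdiv (1 / qr) a * ln 2 = a * ln a - a * ln (1 / qr) + (1 - a) * ln (1 - a) - (1 - a) * ln (1 - 1 / qr).
Proof.
  intros Hq [Ha1 Ha2]. assert (a < 1/2). { assert (1/qr <= 1/2). apply Rmult_le_compat_l; [lra|]. apply Rinv_le_contravar; lra. lra. }
  assert (0 < 1 / qr) by (apply Rdiv_lt_0_compat; lra).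
  unfold Kdiv, log2. assert (1/qr < 1) by (apply Rmult_lt_reg_r with qr; [lra|]; field_simplify; lra). rewrite (ln_div' a (1/qr)), (ln_div' (1-a) (1-1/qr)) by lra. pose proof ln2_pos. field. lra.
Qed.

Lemma cnt0_false {A} (P : A -> bool) l x : cnt P l = 0%nat -> In x l -> P x = false.
Proof. unfold cnt. induction l; simpl; intros H Hx; [destruct Hx|]. destruct (P a) eqn:E; [simpl in H; lia|].
  destruct Hx as [<-|Hx]; auto. Qed.

Lemma per_n (q : nat) (a : R) (n : nat) : (2 <= q)%nat -> 0 < a < 1 / INR q ->
  exists Ys L, (forall y, In y Ys -> In y (words q n)) /\
   (forall x, valid_input q x -> length x = n ->
      exists y, In y Ys /\ (agr x y <= Z.to_nat (Int_part (a * INR n)))%nat) /\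
   (length Ys <= 2 ^ L)%nat /\
   ((2 <= n)%nat -> INR L <= Kdiv (1 / INR q) a * INR n + 20 * (log2 (INR n) + log2 (log2 (INR q)))).
Proof.
  intros Hq [Ha1 Ha2].
  set (qr := INR q). set (N := INR n).
  set (m := Z.to_nat (Int_part (a * N))).
  assert (Hqr : 2 <= qr) by (unfold qr; replace 2 with (INR 2) by (simpl; lra); apply le_INR; auto).
  assert (HN0 : 0 <= N) by apply pos_INR.
  assert (Ha12 : a < 1/2). { assert (1/qr <= 1/2). apply Rmult_le_compat_l; [lra|]. apply Rinv_le_contravar; lra. fold qr in Ha2. lra. }
  destruct (Int_part_nat (a * N) ltac:(nra)) as [Hm1 Hm2]. fold m in Hm1, Hm2.
  assert (Hmn : (m <= n)%nat). { apply INR_le. fold N. nra. }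
  set (V := C n m * INR (q - 1) ^ (n - m)).
  assert (Hq1 : 1 <= INR (q - 1)) by (replace 1 with (INR 1) by (simpl; lra); apply le_INR; lia).
  assert (HV : 0 < V) by (apply Rmult_lt_0_compat; [apply C_pos; auto| apply pow_lt; lra]).
  set (W := words q n).
  assert (HNc : forall x, valid_input q x -> length x = n -> V <= INR (cnt (fun y => Nat.leb (agr x y) m) W)).
  { intros x Hv Hl. apply count_lb; auto; lia. }
  assert (HVW : V <= INR (length W)).
  { eapply Rle_trans; [apply (HNc (repeat 0%nat n))|].
    - intros c Hc. apply repeat_spec in Hc. lia.
    - apply repeat_length.
    - apply le_INR, filter_length_le. }
  set (Q := INR (length W)). fold Q in HVW.
  assert (EQ : Q = qr ^ n) by (unfold Q, W; rewrite words_length, pow_INR; auto).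
  assert (HQ1 : 1 <= Q) by (rewrite EQ; apply pow_R1_Rle; lra).
  assert (HlQ : 0 <= ln Q) by (rewrite <- ln_1; apply ln_le'; lra).
  set (X := Q / V * ln Q).
  assert (HX : 0 <= X) by (unfold X; apply Rmult_le_pos; auto; left; apply Rdiv_lt_0_compat; lra).
  destruct (Int_part_nat X HX) as [Hk1 Hk2].
  set (k := S (Z.to_nat (Int_part X))).
  assert (Hk : X < INR k <= X + 1) by (unfold k; rewrite S_INR; lra).
  destruct (cover_iter q n m V HV HVW HNc k W) as [Ys [HYl [HYW HYc]]].
  { intros x Hx. apply words_valid in Hx. tauto. }
  change (INR (length (words q n))) with Q in HYc.
  assert (Hlt : Q * (1 - V / Q) ^ k < 1).
  { set (s := V / Q). assert (Hs : 0 < s <= 1).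
    { unfold s. split. apply Rdiv_lt_0_compat; lra. apply Rmult_le_reg_r with Q; [lra|]. unfold Rdiv; rewrite Rmult_assoc, Rinv_l, Rmult_1_r by lra. lra. }
    assert ((1 - s) ^ k <= exp (- s) ^ k). { apply pow_incr. split; [lra|]. pose proof (exp_ineq1_le (- s)); lra. }
    rewrite exp_pow' in H.
    assert (INR k * - s < - ln Q).
    { assert (X * s = ln Q) by (unfold X, s; field; lra). nra. }
    assert (exp (INR k * - s) < exp (- ln Q)) by (apply exp_increasing; auto).
    rewrite exp_Ropp, exp_ln in H1 by lra.
    apply Rlt_le_trans with (Q * / Q); [|rewrite Rinv_r by lra; lra].
    apply Rle_lt_trans with (Q * exp (INR k * - s)). apply Rmult_le_compat_l; lra. apply Rmult_lt_compat_l; lra. }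
  assert (Hc0 : cnt (fun x => negb (covers m Ys x)) W = 0%nat).
  { assert (INR (cnt (fun x => negb (covers m Ys x)) W) < 1) . { change (INR (length W)) with Q in HYc. lra. }
    destruct (cnt (fun x => negb (covers m Ys x)) W); auto. rewrite S_INR in H. pose proof (pos_INR n0). lra. }
  assert (Hcov : forall x, valid_input q x -> length x = n -> exists y, In y Ys /\ (agr x y <= m)%nat).
  { intros x Hv Hl. pose proof (cnt0_false _ _ x Hc0 (words_complete q n x Hv Hl)).
    apply Bool.negb_false_iff in H. unfold covers in H. apply existsb_exists in H.
    destruct H as [y [Hy Hy']]. exists y; split; auto. apply Nat.leb_le; auto. }
  destruct (le_lt_dec 2 n) as [Hn2|Hn2].
  2:{ exists Ys, k. split; auto. split; auto. split; [|intros; lia]. rewrite HYl. apply Nat.lt_le_incl, Nat.pow_gt_lin_r; lia. }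
  set (B := Kdiv (1 / qr) a * N + 20 * (log2 N + log2 (log2 qr))).
  assert (HN2 : 2 <= N) by (unfold N; replace 2 with (INR 2) by (simpl; lra); apply le_INR; auto).
  assert (Hmn' : (m < n)%nat). { apply INR_lt. fold N. nra. }
  pose proof (lnQV q n m a Hq ltac:(lia) Hmn' (conj Hm1 Hm2) (conj Ha1 Ha2)) as HL. fold qr N V in HL. rewrite <- EQ in HL.
  rewrite <- Kdiv_ln in HL by (auto; split; auto).
  pose proof ln2_pos. pose proof ln2_lt1. pose proof ln_lt_2.
  assert (HlnN : ln 2 <= ln N) by (apply ln_le'; lra).
  assert (HlQ' : ln Q = N * ln qr) by (rewrite EQ, ln_pow by lra; auto).
  assert (Hlqr : ln 2 <= ln qr) by (apply ln_le'; lra).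
  assert (HX1 : 1 <= X).
  { unfold X. assert (1 <= Q / V). { apply Rmult_le_reg_r with V; auto. field_simplify; lra. }
    assert (1 <= ln Q) by (rewrite HlQ'; nra). nra. }
  assert (Hlnk : ln (INR k) <= ln 2 + (ln Q - ln V) + ln N + ln (ln qr)).
  { apply Rle_trans with (ln (2 * X)). apply ln_le'; lra.
    assert (HQV : 0 < Q / V) by (apply Rdiv_lt_0_compat; lra).
    assert (Hlq : 0 < ln qr) by lra.
    replace (2 * X) with (2 * ((Q / V) * (N * ln qr))) by (unfold X; rewrite HlQ'; ring).
    assert (0 < N * ln qr) by (apply Rmult_lt_0_compat; lra).
    assert (0 < Q / V * (N * ln qr)) by (apply Rmult_lt_0_compat; lra).
    rewrite (ln_mult 2) by lra.
    rewrite (ln_mult (Q / V)) by lra.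
    rewrite (ln_mult N) by lra. rewrite ln_div' by lra. lra. }
  assert (HLL : ln (ln qr) <= ln 2 * log2 (log2 qr)).
  { unfold log2. replace (ln 2 * (ln (ln qr / ln 2) / ln 2)) with (ln (ln qr / ln 2)) by (field; lra).
    apply ln_le'; [lra|]. apply Rmult_le_reg_r with (ln 2); [lra|]. field_simplify; nra. }
  assert (HLL0 : 0 <= log2 (log2 qr)).
  { unfold log2. apply Rmult_le_pos; [|left; apply Rinv_0_lt_compat; lra]. rewrite <- ln_1. apply ln_le'; [lra|].
    apply Rmult_le_reg_r with (ln 2); [lra|]. field_simplify; lra. }
  assert (HN1 : ln (N + 1) <= ln 2 + ln N) by (rewrite <- ln_mult by lra; apply ln_le'; lra).
  assert (EB : (B - 1) * ln 2 = Kdiv (1 / qr) a * ln 2 * N + 20 * ln N + 20 * (ln 2 * log2 (log2 qr)) - ln 2).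
  { unfold B, log2 at 1. field. lra. }
  assert (Hkey : ln (INR k) <= (B - 1) * ln 2) by (rewrite EB; nra).
  assert (Hk0 : 0 <= ln (INR k)) by (rewrite <- ln_1; apply ln_le'; lra).
  assert (HB1 : 1 <= B) by nra.
  destruct (Int_part_nat B ltac:(lra)) as [HL1 HL2].
  exists Ys, (Z.to_nat (Int_part B)). split; auto. split; auto. split; [|intros; exact HL1].
  rewrite HYl. apply INR_le. rewrite pow_INR. simpl INR at 2. replace (1 + 1) with 2 by ring.
  rewrite <- Rpower_pow by lra. unfold Rpower. rewrite <- (exp_ln (INR k)) by lra.
  assert (HH : ln (INR k) <= INR (Z.to_nat (Int_part B)) * ln 2) by nra.
  destruct HH as [HH|HH]; [left; apply exp_increasing; lra| rewrite HH; lra].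
Qed.

Fixpoint dec (L : nat) (t : tape) : nat :=
  match L with O => 0%nat | S L' => (dec L' t + Nat.b2n (t L') * 2 ^ L')%nat end.

Lemma dec_ext L t t' : (forall j, (j < L)%nat -> t j = t' j) -> dec L t = dec L t'.
Proof. induction L; simpl; intros H; auto. rewrite IHL by (intros; apply H; lia). rewrite H by lia. auto. Qed.

Lemma dec_enc L idx : dec L (Nat.testbit idx) = (idx mod 2 ^ L)%nat.
Proof.
  induction L; simpl dec. { change (2 ^ 0)%nat with 1%nat. rewrite Nat.mod_1_r. reflexivity. }
  rewrite IHL, (Nat.testbit_spec' idx L).
  replace (2 ^ S L)%nat with (2 ^ L * 2)%nat by (simpl; lia).
  rewrite Nat.Div0.mod_mul_r. lia.
Qed.

Lemma len_filter_map {A B} (P : B -> bool) (f : A -> B) l :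
  length (filter P (map f l)) = length (filter (fun a => P (f a)) l).
Proof. induction l; simpl; auto. destruct (P (f a)); simpl; auto. Qed.

Lemma agr_filter x y : length y = length x ->
  agr x y = length (filter (fun i => Nat.eqb (nth i y 0%nat) (nth i x 0%nat)) (seq 0 (length x))).
Proof.
  revert y; induction x as [|a x IH]; intros [|b y] Hl; try (simpl in Hl; lia); [reflexivity|].
  change (agr (a::x) (b::y)) with ((if Nat.eqb a b then 1 else 0) + agr x y)%nat.
  change (length (a::x)) with (S (length x)).
  replace (seq 0 (S (length x))) with (0%nat :: map S (seq 0 (length x))) by (rewrite seq_shift; reflexivity).
  cbn [filter nth]. rewrite (Nat.eqb_sym a b).
  destruct (Nat.eqb b a); cbn [length]; rewrite len_filter_map; cbn [nth]; rewrite (IH y) by (simpl in Hl; lia); auto.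
Qed.

Theorem theorem11 :
  exists C : R, forall q : nat, (2 <= q)%nat ->
  forall alpha : R, 0 < alpha < 1 / INR q ->
    Kdiv (1 / INR q) alpha = (1 - hq (INR q) (1 - alpha)) * log2 (INR q) /\
    exists (A : algorithm) (O : oracle),
      (forall n pre t, (A n pre t < q)%nat) /\
      forall x : list nat, valid_input q x ->
        INR (cost A O x) <= alpha * INR (length x) /\
        ((2 <= length x)%nat ->
         reads_at_most A O x
           (Kdiv (1 / INR q) alpha * INR (length x)
            + C * (log2 (INR (length x)) + log2 (log2 (INR q))))).
Proof.
  exists 20. intros q Hq a Ha.
  assert (Hqr : 2 <= INR q) by (replace 2 with (INR 2) by (simpl; lra); apply le_INR; auto).
  split; [apply identity; auto|].
  set (mf := fun n => Z.to_nat (Int_part (a * INR n))).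
  set (P := fun n (p : list (list nat) * nat) =>
    (forall y, In y (fst p) -> In y (words q n)) /\
   (forall x, valid_input q x -> length x = n ->
      exists y, In y (fst p) /\ (agr x y <= mf n)%nat) /\
   (length (fst p) <= 2 ^ snd p)%nat /\
   ((2 <= n)%nat -> INR (snd p) <= Kdiv (1 / INR q) a * INR n + 20 * (log2 (INR n) + log2 (log2 (INR q))))).
  assert (HP : forall n, exists p, P n p).
  { intros n. destruct (per_n q a n Hq Ha) as [Ys [L H]]. exists (Ys, L). exact H. }
  set (F := fun n => proj1_sig (constructive_indefinite_description _ (HP n))).
  assert (HF : forall n, P n (F n)) by (intros n; unfold F; apply proj2_sig).
  set (A := fun n (pre : list nat) (t : tape) =>
    let v := nth (length pre) (nth (dec (snd (F n)) t) (fst (F n)) []) 0%nat in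
    if Nat.ltb v q then v else 0%nat).
  assert (HI : forall x, exists i, valid_input q x ->
     (i < length (fst (F (length x))))%nat /\ (agr x (nth i (fst (F (length x))) []) <= mf (length x))%nat).
  { intros x. destruct (classic (valid_input q x)) as [Hv|Hv]; [|exists 0%nat; tauto].
    destruct (HF (length x)) as [_ [Hc _]]. destruct (Hc x Hv eq_refl) as [y [Hy Hay]].
    destruct (In_nth _ _ [] Hy) as [i [Hi Hyi]]. exists i. intros _. rewrite Hyi. auto. }
  set (idx := fun x => proj1_sig (constructive_indefinite_description _ (HI x))).
  assert (Hidx : forall x, valid_input q x ->
     (idx x < length (fst (F (length x))))%nat /\ (agr x (nth (idx x) (fst (F (length x))) []) <= mf (length x))%nat).
  { intros x Hv. unfold idx. apply (proj2_sig (constructive_indefinite_description _ (HI x))); auto. }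
  set (O := fun x => Nat.testbit (idx x)).
  exists A, O. split.
  { intros n pre t. unfold A. cbv zeta. destruct (Nat.ltb_spec (nth (length pre) (nth (dec (snd (F n)) t) (fst (F n)) []) 0%nat) q); lia. }
  intros x Hv. set (n := length x).
  destruct (Hidx x Hv) as [Hi Hag]. fold n in Hi, Hag.
  destruct (HF n) as [HW [_ [Hlen HB]]].
  set (y := nth (idx x) (fst (F n)) []).
  assert (Hy : In y (words q n)) by (apply HW, nth_In; auto).
  apply words_valid in Hy. destruct Hy as [Hyl Hyv].
  assert (Hdec : dec (snd (F n)) (O x) = idx x).
  { unfold O. rewrite dec_enc. apply Nat.mod_small. lia. }
  assert (Hout : forall t, dec (snd (F n)) t = idx x -> forall i, (i < n)%nat -> out A x t i = nth i y 0%nat).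
  { intros t Ht i Hin. unfold out, A. fold n. cbv zeta. rewrite Ht. fold y.
    rewrite length_firstn. replace (Nat.min i (length x)) with i by lia.
    assert (nth i y 0%nat < q)%nat by (apply Hyv, nth_In; lia).
    apply Nat.ltb_lt in H. rewrite H. auto. }
  split.
  - assert (Hc : cost A O x = agr x y).
    { unfold cost. rewrite agr_filter by lia. fold n. f_equal. apply filter_ext_in.
      intros i Hin. apply in_seq in Hin. rewrite Hout; auto. lia. }
    rewrite Hc. destruct (Int_part_nat (a * INR n)) as [Hm1 _].
    { apply Rmult_le_pos; [lra|apply pos_INR]. }
    apply Rle_trans with (INR (mf n)). apply le_INR; auto. exact Hm1.
  - intros Hn2 t' Ht' i Hin. fold n in Hin.
    rewrite (Hout (O x) Hdec i Hin). apply Hout; auto.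
    rewrite <- Hdec. apply dec_ext. intros j Hj. apply Ht'.
    fold n. specialize (HB Hn2). simpl in HB. apply lt_INR in Hj. lra.
Qed.
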